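(* If $\mathcal F=(X,\le,R,S)$ is a WHB-frame, then $\mathcal A(\mathcal F)=(\mathrm{Up}(X),\cap,\cup,\Rightarrow_R,\Leftarrow_S,\emptyset,X)$ is a WHB-algebra.
   Context: A WHB-frame is $(X,\le,R,S)$ with $\le$ a partial order on $X$ and $R,S$ binary relations on $X$ such that: if $x\le y$ and $(y,z)\in R$ then $(x,z)\in R$; if $x\le y$ and $(x,z)\in S$ then $(y,z)\in S$; and $S=R^{-1}$ (i.e. $(x,y)\in S$ iff $(y,x)\in R$). $\mathrm{Up}(X)$ is the set of upsets of $(X,\le)$; for $U,V\in\mathrm{Up}(X)$, $U\Rightarrow_R V=\{x\colon R(x)\cap U\subseteq V\}$ and $U\Leftarrow_S V=\{x\colon S(x)\cap(U\setminus V)\neq\emptyset\}$, where $\mathcal R(x)=\{y\colon(x,y)\in\mathcal R\}$. A WHB-algebra is an algebra $(A,\wedge,\vee,\to,\leftarrow,0,1)$ such that $(A,\wedge,\vee,0,1)$ is a bounded distributive lattice and for all $a,b,c\in A$: $a\to a=1$; $a\to(b\wedge c)=(a\to b)\wedge(a\to c)$; $(a\vee b)\to c=(a\to c)\wedge(b\to c)$; $(a\to b)\wedge(b\to c)\le a\to c$; $a\leftarrow a=0$; $(a\vee b)\leftarrow c=(a\leftarrow c)\vee(b\leftarrow c)$; $a\leftarrow(b\wedge c)=(a\leftarrow b)\vee(a\leftarrow c)$; $a\leftarrow c\le(a\leftarrow b)\vee(b\leftarrow c)$; $a\wedge((a\to b)\leftarrow 0)\le b$; $a\le b\vee(1\to(a\leftarrow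 b))$. *)

(* Defs.v *)
Set Implicit Arguments.

Section Defs.
Variable X : Type.

Definition partial_order (le : X -> X -> Prop) : Prop :=
  (forall x, le x x) /\
  (forall x y, le x y -> le y x -> x = y) /\
  (forall x y z, le x y -> le y z -> le x z).

Definition WHB_frame (le R S : X -> X -> Prop) : Prop :=
  partial_order le /\
  (forall x y z, le x y -> R y z -> R x z) /\
  (forall x y z, le x y -> S x z -> S y z) /\
  (forall x y, S x y <-> R y x).

Definition upset (le : X -> X -> Prop) (U : X -> Prop) : Prop :=
  forall x y, le x y -> U x -> U y.

Definition set_cap (U V : X -> Prop) : X -> Prop := fun x => U x /\ V x.
Definition set_cup (U V : X -> Prop) : X -> Prop := fun x => U x \/ V x.
Definition set_empty : X -> Prop := fun _ => False.
Definition set_full : X -> Prop := fun _ => True.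

Definition impR (R : X -> X -> Prop) (U V : X -> Prop) : X -> Prop :=
  fun x => forall y, R x y -> U y -> V y.

Definition coimpS (S : X -> X -> Prop) (U V : X -> Prop) : X -> Prop :=
  fun x => exists y, S x y /\ U y /\ ~ V y.
End Defs.

Section Alg.
Variable T : Type.

(** A WHB-algebra whose carrier is the subset [P] of [T] (with Leibniz equality
    of [T]); the operations are given on [T] and must preserve [P]. *)
Definition WHB_algebra (P : T -> Prop)
  (meet join imp coimp : T -> T -> T) (bot top : T) : Prop :=
  P bot /\ P top /\
  (forall a b, P a -> P b ->
     P (meet a b) /\ P (join a b) /\ P (imp a b) /\ P (coimp a b)) /\
  (forall a b c, P a -> P b -> P c ->
     meet a (meet b c) = meet (meet a b) c /\
     join a (join b c) = join (join a b) c /\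
     meet a (join b c) = join (meet a b) (meet a c)) /\
  (forall a b, P a -> P b ->
     meet a b = meet b a /\ join a b = join b a /\
     meet a (join a b) = a /\ join a (meet a b) = a) /\
  (forall a, P a -> meet a top = a /\ join a bot = a) /\
  (* WHB axioms, with a <= b meaning meet a b = a *)
  (forall a b c, P a -> P b -> P c ->
     imp a a = top /\
     imp a (meet b c) = meet (imp a b) (imp a c) /\
     imp (join a b) c = meet (imp a c) (imp b c) /\
     meet (meet (imp a b) (imp b c)) (imp a c) = meet (imp a b) (imp b c) /\
     coimp a a = bot /\
     coimp (join a b) c = join (coimp a c) (coimp b c) /\
     coimp a (meet b c) = join (coimp a b) (coimp a c) /\
     meet (coimp a c) (join (coimp a b) (coimp b c)) = coimp a c /\
     meet (meet a (coimp (imp a b) bot)) b = meet a (coimp (imp a b) bot) /\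
     meet a (join b (imp top (coimp a b))) = a).
End Alg.

(* Main.v *)
Require Import Defs.
From Stdlib Require Import Classical FunctionalExtensionality PropExtensionality.

Lemma sext (X : Type) (f g : X -> Prop) : (forall x, f x <-> g x) -> f = g.
Proof.
  intros H; apply functional_extensionality; intro x; apply propositional_extensionality; auto.
Qed.

Theorem theorem4p7 (X : Type) (le R S : X -> X -> Prop) :
  WHB_frame le R S ->
  WHB_algebra (upset le) (@set_cap X) (@set_cup X) (impR R) (coimpS S)
    (@set_empty X) (@set_full X).
Proof.
  intros [Hpo [HR [HS HSR]]]; clear Hpo.
  unfold WHB_algebra, upset, set_cap, set_cup, impR, coimpS, set_empty, set_full.
  split; [ firstorder | ].
  split; [ firstorder | ].
  split.
  { intros a b Ha Hb; split; [|split; [|split]].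
    - intros x0 y Hxy [H1 H2]; split; eauto.
    - intros x0 y Hxy [H1|H2]; eauto.
    - intros x0 y Hxy H z Hyz Haz; eapply H; eauto.
    - intros x0 y Hxy [z [H1 H2]]; exists z; eauto. }
  split.
  { intros a b c _ _ _; repeat split; apply sext; intro x; tauto. }
  split.
  { intros a b _ _; repeat split; apply sext; intro x; tauto. }
  split.
  { intros a _; split; apply sext; intro x; tauto. }
  intros a b c _ _ _; repeat split; apply sext; intro x.
  - firstorder.
  - firstorder.
  - firstorder.
  - firstorder.
  - firstorder.
  - firstorder.
  - split.
    + intros [y [H1 [H2 H3]]].
      destruct (classic (b y)) as [Hb|Hb]; [right|left]; exists y; tauto.
    + firstorder.
  - split; [ tauto | ].
    intros [y [H1 [H2 H3]]]; split; [ exists y; tauto | ].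
    destruct (classic (b y)) as [Hb|Hb]; [right|left]; exists y; tauto.
  - split; [ tauto | ].
    intros [Ha [y [H1 [H2 _]]]]; split; [split; [exact Ha | exists y; split; [exact H1 | split; [exact H2 | tauto]]] | ].
    apply (H2 x); auto; apply HSR; auto.
  - split; [ tauto | ].
    intros Ha; split; auto.
    destruct (classic (b x)) as [Hb|Hb]; [left; auto | right].
    intros y Hxy _; exists x; split; [apply HSR; auto | tauto].
Qed.
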